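(* For $\epsilon \in [0,1)$, let $H_\epsilon$ be the solution of $$H_\epsilon''(t) = (\epsilon - Q(t)^2)H_\epsilon(t), \quad t > 0, \qquad H_\epsilon(0) = 0,\ H_\epsilon'(0) = -1.$$ Then $H_\epsilon$ changes its sign at least once on $(0,\infty)$. Moreover, its first positive zero $\tau_\epsilon$ satisfies $\tau_\epsilon \ge \tau_0 > 0$, where $\tau_0$ is the first positive zero of $H_0$ (the solution for $\epsilon = 0$).
   Context: $Q(t)$, $t\ge 0$, denotes the radial profile of the positive radial ground state of $\Delta\phi - \phi + |\phi|^2\phi = 0$ on $\mathbb{R}^3$; it solves $-Q'' - \frac{2}{t}Q' + Q - Q^3 = 0$. *)

(* Defs.v *)
From Stdlib Require Import Reals Lra.
From Coquelicot Require Import Coquelicot.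
Open Scope R_scope.

Definition is_right_derive (f : R -> R) (a l : R) : Prop :=
  filterlim (fun h => (f (a + h) - f a) / h) (at_right 0) (locally l).

(* Q is the radial profile (on t >= 0) of the positive radial ground state of
   Delta phi - phi + |phi|^2 phi = 0 on R^3: a positive solution of
   -Q'' - (2/t) Q' + Q - Q^3 = 0 on (0,oo), regular at the origin
   (continuous at 0, Q'(0) = 0), decaying to 0 at infinity.
   (By Coffman/Kwong uniqueness, there is exactly one such Q.) *)
Definition radial_ground_state (Q : R -> R) : Prop :=
  (forall t, 0 <= t -> 0 < Q t) /\
  filterlim Q (at_right 0) (locally (Q 0)) /\
  is_right_derive Q 0 0 /\
  (forall t, 0 < t ->
     ex_derive Q t /\ ex_derive (Derive Q) t /\
     - Derive_n Q 2 t - 2 / t * Derive Q t + Q t - Q t ^ 3 = 0) /\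
  is_lim Q p_infty 0.

Definition is_H_sol (Q : R -> R) (eps : R) (H : R -> R) : Prop :=
  H 0 = 0 /\
  is_right_derive H 0 (-1) /\
  (forall t, 0 < t ->
     ex_derive H t /\ ex_derive (Derive H) t /\
     Derive_n H 2 t = (eps - Q t ^ 2) * H t).

Definition changes_sign_pos (H : R -> R) : Prop :=
  exists s t, 0 < s /\ 0 < t /\ H s * H t < 0.

Definition first_pos_zero (H : R -> R) (tau : R) : Prop :=
  0 < tau /\ H tau = 0 /\ (forall t, 0 < t < tau -> H t <> 0).

(* Main.v *)
Require Import Defs.
From Stdlib Require Import Reals Lra Classical.
From Coquelicot Require Import Coquelicot.
Open Scope R_scope.
Lemma rlim_eps f l : filterlim f (at_right 0) (locally l) ->
  forall e, 0 < e -> exists d, 0 < d /\ forall t, 0 < t < d -> Rabs (f t - l) < e.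
Proof.
  intros Hf e He. destruct (proj1 (filterlim_locally f l) Hf (mkposreal e He)) as [d Hd].
  exists d. split. apply cond_pos. intros t Ht. apply (Hd t).
  - unfold ball; simpl; unfold AbsRing_ball, abs, minus, plus, opp; simpl.
    rewrite Rabs_right by lra. lra.
  - lra.
Qed.

Lemma cont_eps f x : ex_derive f x ->
  forall e, 0 < e -> exists d, 0 < d /\ forall y, Rabs (y - x) < d -> Rabs (f y - f x) < e.
Proof.
  intros Hf e He. pose proof (ex_derive_continuous f x Hf) as C.
  destruct (proj1 (filterlim_locally f (f x)) C (mkposreal e He)) as [d Hd].
  exists d. split. apply cond_pos. intros y Hy. apply (Hd y). exact Hy.
Qed.

Lemma mvt_d f df a b : a < b -> (forall x, a <= x <= b -> is_derive f x (df x)) ->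
  exists c, a <= c <= b /\ f b - f a = df c * (b - a).
Proof.
  intros Hab Hd. destruct (MVT_gen f a b df) as [c [Hc E]].
  - intros x Hx. rewrite Rmin_left in Hx by lra. rewrite Rmax_right in Hx by lra. apply Hd; lra.
  - intros x Hx. rewrite Rmin_left in Hx by lra. rewrite Rmax_right in Hx by lra.
    apply continuity_pt_filterlim. apply (ex_derive_continuous f x). eexists. apply Hd; lra.
  - exists c. rewrite Rmin_left in Hc by lra. rewrite Rmax_right in Hc by lra. auto.
Qed.

Lemma mvt f a b : a < b -> (forall x, a <= x <= b -> ex_derive f x) ->
  exists c, a <= c <= b /\ f b - f a = Derive f c * (b - a).
Proof.
  intros Hab Hd. apply mvt_d; auto. intros x Hx. apply Derive_correct; auto.
Qed.

Lemma lim_pinf f : is_lim f p_infty 0 -> forall e, 0 < e -> exists M, forall x, M < x -> Rabs (f x) < e.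
Proof.
  intros H e He. apply is_lim_spec in H. destruct (H (mkposreal e He)) as [M HM].
  exists M. intros x Hx. specialize (HM x Hx). simpl in HM. rewrite Rminus_0_r in HM. exact HM.
Qed.

Lemma H_near0 Q e H : is_H_sol Q e H ->
  exists d, 0 < d /\ forall t, 0 < t < d -> H t < 0 /\ Rabs (H t) < 2 * t.
Proof.
  intros [H0 [Hd _]].
  destruct (rlim_eps _ _ Hd (1/2)) as [d [dp Hd']]; [lra|].
  exists d; split; auto. intros t Ht. specialize (Hd' t Ht).
  rewrite H0, Rplus_0_l, Rminus_0_r in Hd'.
  apply Rabs_lt_between in Hd'.
  assert (E: H t = (H t / t) * t) by (field; lra).
  rewrite E. split.
  - assert (H t / t < 0) by lra. nra.
  - rewrite Rabs_mult, Rabs_left by lra. rewrite (Rabs_right t) by lra. nra.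
Qed.

Lemma H_der Q e H : is_H_sol Q e H -> forall t, 0 < t ->
  is_derive H t (Derive H t) /\ is_derive (Derive H) t ((e - Q t ^ 2) * H t).
Proof.
  intros [_ [_ Hs]] t Ht. destruct (Hs t Ht) as [a [b c]].
  split. apply Derive_correct; auto.
  rewrite <- c. apply Derive_correct; auto.
Qed.

Lemma Q_near0 Q : radial_ground_state Q ->
  exists d K, 0 < d /\ forall s, 0 < s < d -> 0 < Q s < K.
Proof.
  intros [Qp [Qc _]].
  destruct (rlim_eps _ _ Qc 1) as [d [dp Hd]]; [lra|].
  exists d, (Q 0 + 1). split; auto. intros s Hs. specialize (Hd s Hs).
  apply Rabs_lt_between in Hd. split. apply Qp; lra. lra.
Qed.

Lemma H_dbound Q e H : radial_ground_state Q -> 0 <= e <= 1 -> is_H_sol Q e H ->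
  exists d B, 0 < d /\ forall s, 0 < s <= d -> Rabs (Derive H s) <= B.
Proof.
  intros RQ He HH.
  destruct (Q_near0 Q RQ) as [d1 [K [d1p HQ]]].
  destruct (H_near0 Q e H HH) as [d2 [d2p HH2]].
  set (d := Rmin 1 (Rmin d1 d2) / 2).
  pose proof (Rmin_l 1 (Rmin d1 d2)). pose proof (Rmin_r 1 (Rmin d1 d2)).
  pose proof (Rmin_l d1 d2). pose proof (Rmin_r d1 d2).
  assert (0 < Rmin 1 (Rmin d1 d2)) by (repeat apply Rmin_glb_lt; lra).
  assert (dp : 0 < d) by (unfold d; lra).
  assert (d1' : d < d1) by (unfold d; lra).
  assert (d2' : d < d2) by (unfold d; lra).
  assert (d3' : d < 1) by (unfold d; lra).
  exists d, (Rabs (Derive H d) + (1 + K ^ 2) * 2). split; auto.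
  intros s Hs. destruct (Req_dec s d) as [->|Hne].
  { assert (0 <= (1 + K ^ 2) * 2) by nra. lra. }
  destruct (mvt_d (Derive H) (fun t => (e - Q t ^ 2) * H t) s d) as [c [Hc E]]; [lra| |].
  { intros x Hx. apply (H_der Q e H HH x); lra. }
  assert (Hq := HQ c ltac:(lra)). assert (Hh := HH2 c ltac:(lra)).
  assert (B1 : Rabs ((e - Q c ^ 2) * H c) <= (1 + K ^ 2) * 2).
  { rewrite Rabs_mult. apply Rmult_le_compat; try apply Rabs_pos.
    - apply Rabs_le. split; nra.
    - lra. }
  assert (Rabs (Derive H d - Derive H s) <= (1 + K ^ 2) * 2).
  { rewrite E, Rabs_mult. rewrite (Rabs_right (d - s)) by lra.
    assert (0 <= Rabs ((e - Q c ^ 2) * H c)) by apply Rabs_pos. nra. }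
  pose proof (Rabs_triang_inv (Derive H s) (Derive H d)) as T1.
  rewrite Rabs_minus_sym in T1. lra.
Qed.

Definition w (Q : R -> R) t := t * Q t.
Definition wp (Q : R -> R) t := Q t + t * Derive Q t.

Lemma w_der Q : radial_ground_state Q -> forall t, 0 < t ->
  is_derive (w Q) t (wp Q t) /\ is_derive (wp Q) t ((1 - Q t ^ 2) * w Q t).
Proof.
  intros [_ [_ [_ [Hs _]]]] t Ht. destruct (Hs t Ht) as [a [b c]].
  assert (dQ := Derive_correct _ _ a). assert (ddQ := Derive_correct _ _ b).
  split.
  - unfold w, wp. pose proof (is_derive_mult _ _ _ _ _ (is_derive_id t) dQ ltac:(intros; apply Rmult_comm)) as P.
    replace (Q t + t * Derive Q t) with (plus (mult one (Q t)) (mult t (Derive Q t))).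
    exact P. unfold plus, mult, one; simpl. ring.
  - unfold w, wp. 
    pose proof (is_derive_plus _ _ t _ _ dQ (is_derive_mult _ _ _ _ _ (is_derive_id t) ddQ ltac:(intros; apply Rmult_comm))) as P.
    replace ((1 - Q t ^ 2) * (t * Q t)) with (plus (Derive Q t) (plus (mult one (Derive Q t)) (mult t (Derive (Derive Q) t)))).
    exact P.
    change (Derive_n Q 2 t) with (Derive (Derive Q) t) in c.
    unfold plus, mult, one; simpl.
    assert (E: Derive (Derive Q) t = - 2 / t * Derive Q t + Q t - Q t ^ 3) by lra.
    rewrite E. field. lra.
Qed.

Lemma mono f df a b : a <= b -> (forall x, a<=x<=b -> is_derive f x (df x)) ->
  (forall x, a<=x<=b -> 0 <= df x) -> f a <= f b.
Proof.
  intros Hab Hd Hp. destruct (Req_dec a b) as [->|Hne]; [lra|].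
  destruct (mvt_d f df a b) as [c [Hc E]]; [lra|auto|].
  specialize (Hp c Hc). nra.
Qed.

Lemma smono f df a b : a < b -> (forall x, a<=x<=b -> is_derive f x (df x)) ->
  (forall x, a<=x<=b -> 0 < df x) -> f a < f b.
Proof.
  intros Hab Hd Hp.
  destruct (mvt_d f df a b) as [c [Hc E]]; [lra|auto|].
  specialize (Hp c Hc). nra.
Qed.

Lemma nonneg_lim F b : (forall x y, 0<x<=y -> y<=b -> F x <= F y) ->
  (forall m r, 0<m -> 0<r -> exists s, 0<s<r /\ -m < F s) -> forall t, 0<t<=b -> 0 <= F t.
Proof.
  intros Hm Hl t Ht. destruct (Rle_lt_dec 0 (F t)) as [|Hn]; auto.
  destruct (Hl (- F t) t) as [s [Hs Hs']]; try lra.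
  specialize (Hm s t ltac:(lra) ltac:(lra)). lra.
Qed.

Definition W Q (H : R -> R) t := w Q t * Derive H t - wp Q t * H t.

Lemma W_der Q e H : radial_ground_state Q -> is_H_sol Q e H -> forall t, 0 < t ->
  is_derive (W Q H) t ((e - 1) * w Q t * H t).
Proof.
  intros RQ HH t Ht. destruct (w_der Q RQ t Ht) as [d1 d2].
  destruct (H_der Q e H HH t Ht) as [h1 h2].
  pose proof (is_derive_minus _ _ _ _ _
     (is_derive_mult _ _ _ _ _ d1 h2 ltac:(intros; apply Rmult_comm))
     (is_derive_mult _ _ _ _ _ d2 h1 ltac:(intros; apply Rmult_comm))) as P.
  unfold W. replace ((e - 1) * w Q t * H t) with
   (minus (plus (mult (wp Q t) (Derive H t)) (mult (w Q t) ((e - Q t ^ 2) * H t)))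
     (plus (mult ((1 - Q t ^ 2) * w Q t) (H t)) (mult (wp Q t) (Derive H t)))).
  exact P. unfold minus, plus, mult, opp; simpl. ring.
Qed.

Lemma W_lim Q e H : radial_ground_state Q -> 0 <= e <= 1 -> is_H_sol Q e H ->
  forall m r, 0 < m -> 0 < r -> exists s, 0 < s < r /\ - m < W Q H s.
Proof.
  intros RQ He HH m r Hm Hr.
  destruct (Q_near0 Q RQ) as [d1 [K [d1p HQ]]].
  assert (Kp : 0 < K) by (destruct (HQ (d1/2)); lra).
  destruct (H_dbound Q e H RQ He HH) as [d2 [B [d2p HB]]].
  assert (Bp : 0 <= B) by (specialize (HB d2 ltac:(lra)); pose proof (Rabs_pos (Derive H d2)); lra).
  set (eta := Rmin 1 (m / (2 * (K + 4)))).
  assert (E1 : eta <= 1) by apply Rmin_l.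
  assert (E2 : eta <= m / (2 * (K + 4))) by apply Rmin_r.
  assert (E3 : 0 < eta) by (apply Rmin_glb_lt; [lra| apply Rdiv_lt_0_compat; lra]).
  assert (E4 : eta * (K + 4) <= m / 2).
  { apply Rmult_le_compat_r with (r := K + 4) in E2; [|lra].
    replace (m / (2 * (K + 4)) * (K + 4)) with (m/2) in E2 by (field; lra). lra. }
  destruct RQ as [Qp [Qc [_ [Qs _]]]].
  destruct (rlim_eps _ _ Qc eta E3) as [d3 [d3p HQ3]].
  destruct (H_near0 Q e H HH) as [d4 [d4p HH4]].
  set (z := m / (4 * (K * B + 1))).
  assert (zp : 0 < z) by (apply Rdiv_lt_0_compat; nra).
  assert (Ez : z * (4 * (K * B + 1)) = m) by (unfold z; field; nra).
  set (s := Rmin (Rmin (Rmin r d1) (Rmin d2 d3)) (Rmin d4 (Rmin (eta/2) z)) / 3).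
  assert (S0 : 0 < s).
  { unfold s. apply Rdiv_lt_0_compat; [|lra]. repeat apply Rmin_glb_lt; lra. }
  assert (S1 : 3 * s <= r /\ 3 * s <= d1 /\ 3 * s <= d2 /\ 3 * s <= d3 /\ 3 * s <= d4 /\ 3 * s <= eta / 2 /\ 3 * s <= z).
  { unfold s. replace (3 * _) with (Rmin (Rmin (Rmin r d1) (Rmin d2 d3)) (Rmin d4 (Rmin (eta/2) z))) by field.
    pose proof (Rmin_l (Rmin (Rmin r d1) (Rmin d2 d3)) (Rmin d4 (Rmin (eta/2) z))).
    pose proof (Rmin_r (Rmin (Rmin r d1) (Rmin d2 d3)) (Rmin d4 (Rmin (eta/2) z))).
    pose proof (Rmin_l (Rmin r d1) (Rmin d2 d3)). pose proof (Rmin_r (Rmin r d1) (Rmin d2 d3)).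
    pose proof (Rmin_l r d1). pose proof (Rmin_r r d1). pose proof (Rmin_l d2 d3). pose proof (Rmin_r d2 d3).
    pose proof (Rmin_l d4 (Rmin (eta/2) z)). pose proof (Rmin_r d4 (Rmin (eta/2) z)).
    pose proof (Rmin_l (eta/2) z). pose proof (Rmin_r (eta/2) z). lra. }
  destruct (mvt Q s (2 * s)) as [xi [Hxi EQ]]; [lra| |].
  { intros x Hx. apply (Qs x). lra. }
  exists xi. split; [lra|].
  assert (A1 := HQ3 s ltac:(lra)). assert (A2 := HQ3 (2*s) ltac:(lra)).
  assert (Dq : Rabs (xi * Derive Q xi) <= 4 * eta).
  { assert (Rabs (Derive Q xi * s) <= 2 * eta).
    { replace (Derive Q xi * s) with ((Q (2*s) - Q 0) - (Q s - Q 0)) by (replace (Derive Q xi * s) with (Derive Q xi * (2 * s - s)) by ring; rewrite <- EQ; ring).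
      apply Rabs_lt_between in A1. apply Rabs_lt_between in A2. apply Rabs_le. split; lra. }
    rewrite Rabs_mult in *. rewrite (Rabs_right s) in H0 by lra. rewrite (Rabs_right xi) by lra.
    pose proof (Rabs_pos (Derive Q xi)). nra. }
  assert (Qx := HQ xi ltac:(lra)). assert (Bx := HB xi ltac:(lra)).
  assert (Hx := HH4 xi ltac:(lra)).
  assert (T1 : - (m / 6) <= xi * Q xi * Derive H xi).
  { apply Rabs_le_between in Bx. 
    assert (0 < xi * Q xi <= 2 * s * K) by (split; nra).
    assert (2 * s * K * B <= m / 6).
    { assert (3 * s * (4 * (K * B + 1)) <= z * (4 * (K * B + 1))) by (apply Rmult_le_compat_r; nra). nra. }
    nra. }
  assert (T2 : Rabs ((Q xi + xi * Derive Q xi) * H xi) <= m / 2).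
  { rewrite Rabs_mult. 
    assert (Rabs (Q xi + xi * Derive Q xi) <= K + 4).
    { pose proof (Rabs_triang (Q xi) (xi * Derive Q xi)). rewrite (Rabs_right (Q xi)) in H0 by lra. lra. }
    assert (Rabs (H xi) <= eta) by lra.
    pose proof (Rabs_pos (H xi)). pose proof (Rabs_pos (Q xi + xi * Derive Q xi)). nra. }
  unfold W, w, wp. apply Rabs_le_between in T2. lra.
Qed.

Lemma sign_change Q e H : radial_ground_state Q -> 0 <= e < 1 -> is_H_sol Q e H ->
  exists t, 0 < t /\ 0 < H t.
Proof.
  intros RQ He HH.
  destruct (classic (exists t, 0 < t /\ 0 < H t)) as [|Hn]; auto. exfalso.
  assert (Hc : forall t, 0 < t -> H t <= 0).
  { intros t Ht. destruct (Rle_lt_dec (H t) 0); auto. exfalso; apply Hn; eauto. }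
  assert (wpos : forall t, 0 < t -> 0 < w Q t).
  { intros t Ht. unfold w. destruct RQ as [Qp _]. specialize (Qp t ltac:(lra)). nra. }
  assert (dW := W_der Q e H RQ HH).
  assert (Wm : forall x y, 0 < x <= y -> W Q H x <= W Q H y).
  { intros x y Hxy. apply (mono _ (fun t => (e-1)*w Q t*H t) x y ltac:(lra)).
    - intros z Hz. apply dW. lra.
    - intros z Hz. specialize (wpos z ltac:(lra)). specialize (Hc z ltac:(lra)).
      assert ((e - 1) * w Q z <= 0) by nra. nra. }
  destruct (H_near0 Q e H HH) as [d0 [d0p Hd0]].
  set (a := d0 / 2).
  assert (W0 : 0 <= W Q H (a / 2)).
  { apply (nonneg_lim (W Q H) (a/2)).
    - intros x y Hx Hy. apply Wm. lra.
    - intros m r Hm Hr. apply (W_lim Q e H RQ ltac:(lra) HH m r Hm Hr).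
    - unfold a; lra. }
  assert (W1 : W Q H (a / 2) < W Q H a).
  { apply (smono _ (fun t => (e-1)*w Q t*H t) (a/2) a ltac:(unfold a; lra)).
    - intros z Hz. apply dW. unfold a in *; lra.
    - intros z Hz. specialize (wpos z ltac:(unfold a in *; lra)).
      destruct (Hd0 z ltac:(unfold a in *; lra)) as [Hz' _].
      assert ((e - 1) * w Q z < 0) by nra. nra. }
  set (c := W Q H a). assert (cp : 0 < c) by (unfold c; lra).
  destruct RQ as [Qp [Qc [Qr [Qs Qlim]]]].
  destruct (lim_pinf Q Qlim (1/2)) as [T HT]; [lra|].
  set (T0 := Rmax T 1).
  assert (T0a : T <= T0) by apply Rmax_l. assert (T0b : 1 <= T0) by apply Rmax_r.
  assert (RQ : radial_ground_state Q) by exact (conj Qp (conj Qc (conj Qr (conj Qs Qlim)))).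
  assert (Wpd : forall t, T0 < t -> 0 <= (1 - Q t ^ 2) * w Q t).
  { intros t Ht. specialize (HT t ltac:(lra)). specialize (wpos t ltac:(lra)).
    apply Rabs_lt_between in HT. assert (0 <= 1 - Q t ^ 2) by nra. nra. }
  assert (wpn : forall t1, T0 < t1 -> wp Q t1 <= 0).
  { intros t1 Ht1. destruct (Rle_lt_dec (wp Q t1) 0) as [|Hal]; auto. exfalso.
    set (al := wp Q t1).
    assert (Hge : forall t, t1 <= t -> al <= wp Q t).
    { intros t Ht. unfold al. apply (mono (wp Q) (fun z => (1 - Q z ^ 2) * w Q z) t1 t Ht).
      - intros z Hz. apply (w_der Q RQ z). lra.
      - intros z Hz. apply Wpd. lra. }
    destruct (lim_pinf Q Qlim (al/2)) as [T2 HT2]; [unfold al; lra|].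
    set (t := Rmax (2 * t1) T2 + 1).
    assert (t1a : 2 * t1 <= Rmax (2 * t1) T2) by apply Rmax_l.
    assert (t1b : T2 <= Rmax (2 * t1) T2) by apply Rmax_r.
    destruct (mvt_d (w Q) (wp Q) t1 t) as [xi [Hxi E]]; [unfold t; lra| |].
    { intros z Hz. apply (w_der Q RQ z). lra. }
    specialize (Hge xi ltac:(lra)). specialize (HT2 t ltac:(unfold t; lra)).
    specialize (wpos t1 ltac:(lra)).
    apply Rabs_lt_between in HT2. unfold w in E, wpos.
    assert (t * Q t > al * (t - t1)) by nra.
    assert (t * Q t < t * (al / 2)) by (apply Rmult_lt_compat_l; unfold t in *; lra).
    assert (al * (t - t1) >= al * (t / 2)) by (apply Rmult_ge_compat_l; unfold t in *; lra).
    lra. }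
  set (T1 := Rmax T0 a + 1).
  assert (T1a : T0 <= Rmax T0 a) by apply Rmax_l.
  assert (T1b : a <= Rmax T0 a) by apply Rmax_r.
  set (M := w Q T1). assert (Mp : 0 < M) by (apply wpos; unfold T1; lra).
  assert (wle : forall t, T1 <= t -> w Q t <= M).
  { intros t Ht. destruct (Req_dec t T1) as [->|Hne]; [unfold M; lra|].
    destruct (mvt_d (w Q) (wp Q) T1 t) as [xi [Hxi E]]; [lra| |].
    { intros z Hz. apply (w_der Q RQ z). unfold T1 in *; lra. }
    specialize (wpn xi ltac:(unfold T1 in *; lra)). unfold M. nra. }
  assert (Hd : forall t, T1 <= t -> c / M <= Derive H t).
  { intros t Ht. assert (Wt : c <= W Q H t) by (unfold c; apply Wm; split; [unfold a; lra| unfold T1 in *; lra]).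
    unfold W in Wt.
    specialize (wpn t ltac:(unfold T1 in *; lra)). specialize (Hc t ltac:(unfold T1 in *; lra)).
    specialize (wle t Ht). specialize (wpos t ltac:(unfold T1 in *; lra)).
    assert (c <= w Q t * Derive H t) by nra.
    assert (0 < Derive H t) by nra.
    assert (c <= M * Derive H t) by nra.
    apply (Rmult_le_reg_l M); [lra|]. unfold Rdiv. rewrite <- Rmult_assoc, (Rmult_comm M c), Rmult_assoc, Rinv_r; lra. }
  set (t := T1 + M / c * (1 - H T1)).
  assert (HT1 := Hc T1 ltac:(unfold T1 in *; lra)).
  assert (tp : 0 <= M / c * (1 - H T1)) by (apply Rmult_le_pos; [apply Rlt_le, Rdiv_lt_0_compat|]; lra).
  destruct (mvt H T1 t) as [xi [Hxi E]].
  { unfold t. assert (0 < M / c * (1 - H T1)) by (apply Rmult_lt_0_compat; [apply Rdiv_lt_0_compat|]; lra). lra. }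
  { intros z Hz. eexists. apply (H_der Q e H HH z). unfold T1 in *; lra. }
  specialize (Hd xi ltac:(lra)).
  assert (c / M * (t - T1) = 1 - H T1) by (unfold t; field; lra).
  assert (H t - H T1 >= c / M * (t - T1)) by (rewrite E; apply Rmult_ge_compat_r; lra).
  specialize (Hc t ltac:(unfold T1 in *; lra)). lra.
Qed.

Lemma first_zero Q e H : radial_ground_state Q -> 0 <= e < 1 -> is_H_sol Q e H ->
  exists tau, first_pos_zero H tau /\ (forall t, 0 < t < tau -> H t < 0).
Proof.
  intros RQ He HH.
  destruct (H_near0 Q e H HH) as [d0 [d0p Hd0]].
  destruct (sign_change Q e H RQ He HH) as [tp [tpp Htp]].
  set (Ed := fun x => 0 < x /\ forall t, 0 < t <= x -> H t < 0).
  destruct (completeness Ed) as [tau [Hub Hlub]].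
  { exists tp. intros x [Hx Hx']. destruct (Rle_lt_dec x tp); auto.
    specialize (Hx' tp ltac:(lra)). lra. }
  { exists (d0/2). split; [lra|]. intros t Ht. apply Hd0. lra. }
  assert (Etau : d0 / 2 <= tau).
  { apply Hub. split; [lra|]. intros t Ht. apply Hd0. lra. }
  assert (Hlt : forall t, 0 < t < tau -> H t < 0).
  { intros t Ht. destruct (classic (exists x, Ed x /\ t < x)) as [[x [[Hx Hx'] Htx]]|Hn].
    - apply Hx'. lra.
    - assert (tau <= t); [|lra]. apply Hlub. intros x Ex.
      destruct (Rle_lt_dec x t); auto. exfalso; apply Hn; eauto. }
  exists tau. split; [|exact Hlt].
  split; [lra|]. split; [|intros t Ht; specialize (Hlt t Ht); lra].
  assert (Dt : ex_derive H tau) by (eexists; apply (H_der Q e H HH tau); lra).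
  destruct (Rtotal_order (H tau) 0) as [Hn|[Hz|Hp]]; auto; exfalso.
  - destruct (cont_eps H tau Dt (- H tau) ltac:(lra)) as [d [dp Hd]].
    assert (tau + d / 2 <= tau); [|lra].
    apply Hub. split; [lra|]. intros t Ht.
    destruct (Rlt_le_dec t tau) as [Hlt'|Hge]. apply Hlt; lra.
    assert (Rabs (t - tau) < d) by (apply Rabs_lt_between; split; lra).
    specialize (Hd t H0). apply Rabs_lt_between in Hd. lra.
  - destruct (cont_eps H tau Dt (H tau) ltac:(lra)) as [d [dp Hd]].
    set (y := Rmax (tau - d / 2) (tau / 2)).
    assert (y1 : tau - d / 2 <= y) by apply Rmax_l. assert (y2 : tau / 2 <= y) by apply Rmax_r.
    assert (y3 : y < tau) by (unfold y; apply Rmax_lub_lt; lra).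
    assert (Rabs (y - tau) < d) by (apply Rabs_lt_between; split; lra).
    specialize (Hd y H0). apply Rabs_lt_between in Hd. specialize (Hlt y ltac:(lra)). lra.
Qed.

Lemma compare Q e H H0 tau tau0 : radial_ground_state Q -> 0 <= e < 1 ->
  is_H_sol Q e H -> is_H_sol Q 0 H0 ->
  first_pos_zero H tau -> (forall t, 0 < t < tau -> H t < 0) ->
  first_pos_zero H0 tau0 -> (forall t, 0 < t < tau0 -> H0 t < 0) -> tau0 <= tau.
Proof.
  intros RQ He HH HH0 [taup [Htau _]] Hn [tau0p [Htau0 _]] Hn0.
  destruct (Rle_lt_dec tau0 tau) as [|Hlt]; auto. exfalso.
  set (V := fun t => H0 t * Derive H t - Derive H0 t * H t).
  assert (dV : forall t, 0 < t -> is_derive V t (e * H0 t * H t)).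
  { intros t Ht. destruct (H_der Q e H HH t Ht) as [h1 h2].
    destruct (H_der Q 0 H0 HH0 t Ht) as [g1 g2].
    pose proof (is_derive_minus _ _ _ _ _
     (is_derive_mult _ _ _ _ _ g1 h2 ltac:(intros; apply Rmult_comm))
     (is_derive_mult _ _ _ _ _ g2 h1 ltac:(intros; apply Rmult_comm))) as P.
    unfold V. replace (e * H0 t * H t) with
     (minus (plus (mult (Derive H0 t) (Derive H t)) (mult (H0 t) ((e - Q t ^ 2) * H t)))
       (plus (mult ((0 - Q t ^ 2) * H0 t) (H t)) (mult (Derive H0 t) (Derive H t)))).
    exact P. unfold minus, plus, mult, opp; simpl. ring. }
  assert (Hle : forall t, 0 < t <= tau -> H t <= 0).
  { intros t Ht. destruct (Req_dec t tau) as [->|]; [lra|]. specialize (Hn t ltac:(lra)). lra. }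
  assert (Vm : forall x y, 0 < x <= y -> y <= tau -> V x <= V y).
  { intros x y Hxy Hy. apply (mono V (fun t => e * H0 t * H t) x y ltac:(lra)).
    - intros z Hz. apply dV. lra.
    - intros z Hz. specialize (Hn0 z ltac:(lra)). specialize (Hle z ltac:(lra)).
      assert (e * H0 z <= 0) by nra. nra. }
  assert (Vl : forall m r, 0 < m -> 0 < r -> exists s, 0 < s < r /\ - m < V s).
  { intros m r Hm Hr.
    destruct (H_dbound Q e H RQ ltac:(lra) HH) as [d1 [B1 [d1p HB1]]].
    destruct (H_dbound Q 0 H0 RQ ltac:(lra) HH0) as [d2 [B2 [d2p HB2]]].
    destruct (H_near0 Q e H HH) as [d3 [d3p Hd3]].
    destruct (H_near0 Q 0 H0 HH0) as [d4 [d4p Hd4]].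
    assert (B1p : 0 <= B1) by (specialize (HB1 d1 ltac:(lra)); pose proof (Rabs_pos (Derive H d1)); lra).
    assert (B2p : 0 <= B2) by (specialize (HB2 d2 ltac:(lra)); pose proof (Rabs_pos (Derive H0 d2)); lra).
    set (z := m / (2 * (B1 + B2) + 1)).
    assert (zp : 0 < z) by (apply Rdiv_lt_0_compat; lra).
    assert (Ez : z * (2 * (B1 + B2) + 1) = m) by (unfold z; field; lra).
    set (s := Rmin (Rmin (Rmin r d1) (Rmin d2 d3)) (Rmin d4 z) / 2).
    assert (S0 : 0 < s) by (unfold s; apply Rdiv_lt_0_compat; [repeat apply Rmin_glb_lt; lra|lra]).
    assert (S1 : 2 * s <= r /\ 2 * s <= d1 /\ 2 * s <= d2 /\ 2 * s <= d3 /\ 2 * s <= d4 /\ 2 * s <= z).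
    { unfold s. replace (2 * _) with (Rmin (Rmin (Rmin r d1) (Rmin d2 d3)) (Rmin d4 z)) by field.
      pose proof (Rmin_l (Rmin (Rmin r d1) (Rmin d2 d3)) (Rmin d4 z)).
      pose proof (Rmin_r (Rmin (Rmin r d1) (Rmin d2 d3)) (Rmin d4 z)).
      pose proof (Rmin_l (Rmin r d1) (Rmin d2 d3)). pose proof (Rmin_r (Rmin r d1) (Rmin d2 d3)).
      pose proof (Rmin_l r d1). pose proof (Rmin_r r d1). pose proof (Rmin_l d2 d3). pose proof (Rmin_r d2 d3).
      pose proof (Rmin_l d4 z). pose proof (Rmin_r d4 z). lra. }
    exists s. split; [lra|].
    specialize (HB1 s ltac:(lra)). specialize (HB2 s ltac:(lra)).
    destruct (Hd3 s ltac:(lra)) as [_ A3]. destruct (Hd4 s ltac:(lra)) as [_ A4].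
    apply Rabs_le_between in HB1. apply Rabs_le_between in HB2.
    apply Rabs_lt_between in A3. apply Rabs_lt_between in A4.
    assert (2 * s * (2 * (B1 + B2) + 1) <= z * (2 * (B1 + B2) + 1)) by (apply Rmult_le_compat_r; lra).
    unfold V.
    assert (- (2 * s * B1) <= H0 s * Derive H s) by nra.
    assert (- (2 * s * B2) <= - (Derive H0 s * H s)) by nra.
    nra. }
  assert (Vp : forall t, 0 < t <= tau -> 0 <= V t).
  { apply nonneg_lim; auto. }
  set (g := fun t => H t / H0 t).
  assert (gm : g (tau / 2) <= g tau).
  { apply (mono g (fun t => V t / H0 t ^ 2) (tau/2) tau ltac:(lra)).
    - intros z Hz. destruct (H_der Q e H HH z ltac:(lra)) as [h1 _].
      destruct (H_der Q 0 H0 HH0 z ltac:(lra)) as [g1 _].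
      specialize (Hn0 z ltac:(lra)).
      pose proof (is_derive_div _ _ _ _ _ h1 g1 ltac:(lra)) as P.
      unfold g, V. replace ((H0 z * Derive H z - Derive H0 z * H z) / H0 z ^ 2)
        with ((Derive H z * H0 z - H z * Derive H0 z) / H0 z ^ 2) by (field; lra). exact P.
    - intros z Hz. specialize (Hn0 z ltac:(lra)). specialize (Vp z ltac:(lra)).
      unfold Rdiv. apply Rmult_le_pos; auto. apply Rlt_le, Rinv_0_lt_compat. nra. }
  unfold g in gm. rewrite Htau in gm. replace (0 / H0 tau) with 0 in gm by (unfold Rdiv; ring).
  specialize (Hn (tau/2) ltac:(lra)). specialize (Hn0 (tau/2) ltac:(lra)).
  assert (0 < H (tau/2) / H0 (tau/2)).
  { assert (/ H0 (tau/2) < 0) by (apply Rinv_lt_0_compat; lra). unfold Rdiv. nra. }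
  lra.
Qed.

Theorem lemma7p1 (Q : R -> R) (eps : R) (H H0 : R -> R) :
  radial_ground_state Q ->
  0 <= eps < 1 ->
  is_H_sol Q eps H ->
  is_H_sol Q 0 H0 ->
  changes_sign_pos H /\
  exists tau tau0,
    first_pos_zero H tau /\ first_pos_zero H0 tau0 /\
    tau0 <= tau /\ 0 < tau0.
Proof.
  intros RQ He HH HH0.
  destruct (H_near0 Q eps H HH) as [d0 [d0p Hd0]].
  destruct (sign_change Q eps H RQ He HH) as [tp [tpp Htp]].
  split.
  { exists (d0/2), tp. split; [lra|]. split; [lra|].
    destruct (Hd0 (d0/2) ltac:(lra)) as [A _]. nra. }
  destruct (first_zero Q eps H RQ He HH) as [tau [F1 N1]].
  destruct (first_zero Q 0 H0 RQ ltac:(lra) HH0) as [tau0 [F2 N2]].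
  exists tau, tau0. split; [auto|]. split; [auto|]. split.
  - apply (compare Q eps H H0 tau tau0); auto.
  - destruct F2; auto.
Qed.
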